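(* Let $k\ge 3$, let $n$ be divisible by $3$, $\mathbf{X}\in\{0,1\}^{n/3\times n/3}$ and $\mu,\upsilon\in\{0,1\}^{n/3}$. Then the number of $k$-cliques in $\mathsf{G}_k^{\mu,\upsilon}(\mathbf{X})$ equals $K_3(G^{\mu,\upsilon}(\mathbf{X}))\cdot(n/3)^{k-3}$, where $K_3(\cdot)$ denotes the number of triangles.
   Context: $G^{\mu,\upsilon}(\mathbf{X})$ is the tripartite graph on vertex sets $U=\{u_1,\dots,u_{n/3}\}$, $Y=\{y_1,\dots,y_{n/3}\}$, $W=\{w_1,\dots,w_{n/3}\}$ whose edges are exactly: $\{u_i,y_j\}$ iff $\mathbf{X}_{i,j}=1$; $\{u_i,w_j\}$ for all $j$ iff $\mu_i=1$; $\{y_i,w_j\}$ for all $j$ iff $\upsilon_i=1$. $\mathsf{G}_k^{\mu,\upsilon}(\mathbf{X})$ has vertex set the disjoint union of $\mathsf{U}=\{\mathsf{u}_1,\dots,\mathsf{u}_{n/3}\}$, $\mathsf{Y}=\{\mathsf{y}_1,\dots,\mathsf{y}_{n/3}\}$ and $\mathsf{W}_p=\{\mathsf{w}_{p,1},\dots,\mathsf{w}_{p,n/3}\}$ for $1\le p\le k-2$, with edges exactly: $\{\mathsf{u}_i,\mathsf{y}_j\}$ iff $\mathbf{X}_{i,j}=1$; $\{\mathsf{u}_i,\mathsf{w}_{p,j}\}$ for all $p,j$ iff $\mu_i=1$; $\{\mathsf{y}_i,\mathsf{w}_{p,j}\}$ for all $p,j$ iff $\upsilon_i=1$; $\{\mathsf{w}_{p,i},\mathsf{w}_{q,j}\}$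 for all $i,j$ and $p\ne q$. A $k$-clique is a set of $k$ pairwise adjacent vertices. *)

(* Defs.v *)
From mathcomp Require Import all_boot.
Set Implicit Arguments. Unset Strict Implicit. Unset Printing Implicit Defensive.

Definition is_clique (V : finType) (adj : rel V) (S : {set V}) : bool :=
  [forall x in S, forall y in S, (x != y) ==> adj x y].

Definition num_cliques (V : finType) (adj : rel V) (k : nat) : nat :=
  #|[set S : {set V} | is_clique adj S && (#|S| == k)]|.

(* Small tripartite graph G^{mu,ups}(X) with m = n/3.
   Vertices: (part, index), part 0 = U, 1 = Y, 2 = W. *)
Definition smallV (m : nat) := ('I_3 * 'I_m)%type.

Definition small_adj (m : nat) (X : 'I_m -> 'I_m -> bool) (mu ups : 'I_m -> bool)
  (a b : smallV m) : bool :=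
  match nat_of_ord a.1, nat_of_ord b.1 with
  | 0, 1 => X a.2 b.2
  | 1, 0 => X b.2 a.2
  | 0, 2 => mu a.2
  | 2, 0 => mu b.2
  | 1, 2 => ups a.2
  | 2, 1 => ups b.2
  | _, _ => false
  end.

(* Big graph G_k^{mu,ups}(X): parts inr false = U, inr true = Y,
   inl p = W_{p+1} for p < k-2. *)
Definition bigV (k m : nat) := (('I_(k - 2) + bool) * 'I_m)%type.

Definition big_adj (k m : nat) (X : 'I_m -> 'I_m -> bool) (mu ups : 'I_m -> bool)
  (a b : bigV k m) : bool :=
  match a.1, b.1 with
  | inr false, inr true => X a.2 b.2
  | inr true, inr false => X b.2 a.2
  | inr false, inl _ => mu a.2
  | inl _, inr false => mu b.2
  | inr true, inl _ => ups a.2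
  | inl _, inr true => ups b.2
  | inl p, inl q => p != q
  | _, _ => false
  end.

Arguments big_adj k {m} X mu ups a b.
Arguments small_adj {m} X mu ups a b.

(* Main.v *)
Require Import Defs.
From mathcomp Require Import all_boot zify.

Section Gen.
Variables (P : finType) (m : nat).

Lemma countB (a b : P) (Q : 'I_m -> 'I_m -> bool) : a != b ->
  #|[set h : {ffun P -> 'I_m} | Q (h a) (h b)]| =
  #|[set p : 'I_m * 'I_m | Q p.1 p.2]| * m ^ (#|P| - 2).
Proof.
move=> nab.
rewrite -sum1dep_card (partition_big (fun h : {ffun P -> 'I_m} => (h a, h b)) (fun p : 'I_m * 'I_m => Q p.1 p.2)) //=.
rewrite -sum_nat_cond_const; apply: eq_bigr => [[x y]] /= Qxy.
pose F := fun c : P => if c == a then pred1 x else if c == b then pred1 y else predT.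
rewrite sum1dep_card.
have -> : #|[set h : {ffun P -> 'I_m} | Q (h a) (h b) && ((h a, h b) == (x, y))]| = #|(family F : simpl_pred _)|.
  rewrite cardsE; apply: eq_card => h; rewrite !inE.
  apply/idP/familyP.
    case/andP=> _ /eqP [ha hb] c; rewrite /F; case: eqP => [->|_]; first by rewrite inE ha.
    by case: eqP => [->|_]; rewrite ?inE ?hb.
  move=> H; rewrite unfold_in /=; have := H a; rewrite /F eqxx inE => /eqP ->.
  have := H b; rewrite /F eq_sym (negbTE nab) eqxx inE => /eqP ->.
  by rewrite Qxy eqxx.
rewrite card_family foldrE big_map big_enum /=.
have nba : (b == a) = false by rewrite eq_sym (negbTE nab).
rewrite (bigD1 a) //= (bigD1 b) /=; last by rewrite nba.
rewrite /F eqxx nba eqxx !card1 !mul1n.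
rewrite (eq_bigr (fun _ => m)); last first.
  by move=> c /andP [nca ncb]; rewrite (negbTE nca) (negbTE ncb) card_ord.
rewrite prod_nat_const; congr (_ ^ _).
rewrite [#|P|](cardD1 a) [#|[predD1 _ & a]|](cardD1 b) !inE nba /= add1n add1n subn2 /=.
apply: eq_card => c; rewrite !inE unfold_in /= andbT; apply: andbC.
Qed.
End Gen.

Section Gen2.
Variables (P : finType) (m : nat) (adj : rel (P * 'I_m)).
Hypothesis Hpart : forall c i j, adj (c, i) (c, j) = false.

Definition sec (h : {ffun P -> 'I_m}) : {set P * 'I_m} := [set (c, h c) | c : P].
Definition good (h : {ffun P -> 'I_m}) : bool :=
  [forall c, forall d, (c != d) ==> adj (c, h c) (d, h d)].

Lemma sec_inj : injective sec.
Proof.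
move=> h1 h2 e; apply/ffunP => c.
have : (c, h1 c) \in sec h2 by rewrite -e; apply: imset_f.
by case/imsetP => d _ [e1 e2]; rewrite e2 e1.
Qed.

Lemma countA kk : kk = #|P| ->
  num_cliques adj kk = #|[set h : {ffun P -> 'I_m} | good h]|.
Proof.
move=> Hkk; rewrite /num_cliques.
have -> : [set S | is_clique adj S && (#|S| == kk)] = sec @: [set h | good h].
  apply/setP => S; rewrite inE; apply/andP/imsetP.
    case=> cl /eqP cS.
    have clP : forall x y, x \in S -> y \in S -> x != y -> adj x y.
      move=> x y xS yS nxy; move/forall_inP: cl => /(_ x xS) /forall_inP /(_ y yS).
      by rewrite nxy.
    have inj : {in S &, injective (@fst P 'I_m)}.
      move=> [c i] [d j] xS yS /= e; subst d; apply/eqP; apply/negPn/negP => nxy.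
      by have := clP _ _ xS yS nxy; rewrite Hpart.
    have fS : (@fst P 'I_m) @: S = setT.
      by apply/eqP; rewrite eqEcard subsetT cardsT (card_in_imset inj) cS Hkk leqnn.
    have full : forall c, exists i, (c, i) \in S.
      move=> c; have : c \in (@fst P 'I_m) @: S by rewrite fS inE.
      by case/imsetP => x xS ->; exists x.2; rewrite -surjective_pairing.
    have [f Hf] := fin_all_exists full.
    exists (finfun f).
      rewrite inE; apply/forallP => c; apply/forallP => d; apply/implyP => ncd.
      rewrite !ffunE. apply: clP; rewrite ?Hf //.
      by rewrite xpair_eqE negb_and ncd.
    apply/setP => [[c i]]; apply/idP/imsetP.
      move=> ci; exists c => //.  rewrite ffunE; apply/eqP; apply/negPn/negP => nx.
      by have := clP _ _ ci (Hf c) nx; rewrite Hpart.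
    by case=> d _ ->; rewrite ffunE; apply: Hf.
  case=> h; rewrite inE => gh ->; split.
    apply/forall_inP => x /imsetP [c _ ->]; apply/forall_inP => y /imsetP [d _ ->].
    apply/implyP => ne.
    have ncd : c != d by apply: contraNneq ne => ->.
    by move/forallP: gh => /(_ c) /forallP /(_ d) /implyP; apply.
  rewrite card_imset; last by move=> c d []. 
  by rewrite Hkk.
by rewrite card_imset //; apply: sec_inj.
Qed.
End Gen2.
Arguments good {P m} adj h.
Arguments sec {P m} h.

Definition o0 : 'I_3 := Ordinal (isT : 0 < 3).
Definition o1 : 'I_3 := Ordinal (isT : 1 < 3).
Definition o2 : 'I_3 := Ordinal (isT : 2 < 3).

Lemma ord3 (c : 'I_3) : c = o0 \/ c = o1 \/ c = o2.
Proof.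
case: c => [[|[|[|c]]] Hc] //; [left|right;left|right;right]; exact: val_inj.
Qed.

Lemma big_count (k m : nat) (hk : 3 <= k) (X : 'I_m -> 'I_m -> bool) (mu ups : 'I_m -> bool) :
  num_cliques (big_adj k X mu ups) k =
  #|[set p : 'I_m * 'I_m | X p.1 p.2 && mu p.1 && ups p.2]| * m ^ (k - 2).
Proof.
have Hp : forall c i j, big_adj k X mu ups (c, i) (c, j) = false.
  by move=> [p|[]] i j; rewrite /big_adj /= ?eqxx.
have HP : k = #|{: 'I_(k-2) + bool}| by rewrite card_sum card_ord card_bool; lia.
rewrite (@countA ('I_(k-2) + bool)%type m (big_adj k X mu ups) Hp k HP).
have p0 : 'I_(k-2) by apply: (@Ordinal _ 0); lia.
have -> : [set h | good (big_adj k X mu ups) h] =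
   [set h : {ffun _ -> 'I_m} | (fun u y => X u y && mu u && ups y) (h (inr false)) (h (inr true))].
  apply/setP => h; rewrite !inE /=; apply/idP/idP.
    move=> g; have G : forall c d, c != d -> big_adj k X mu ups (c, h c) (d, h d).
      by move=> c d ncd; move/forallP: g => /(_ c) /forallP /(_ d) /implyP; apply.
    have := G (inr false) (inr true) isT; have := G (inr false) (inl p0) isT.
    have := G (inr true) (inl p0) isT.
    by rewrite /big_adj /= => -> -> ->.
  case/andP => [/andP [x m1] u1].
  apply/forallP => c; apply/forallP => d; apply/implyP => ne.
  move: c d ne => [p|[]] [q|[]] ne; rewrite /big_adj /= ?x ?m1 ?u1 //; try by rewrite eqxx in ne.
have E := @countB ('I_(k-2) + bool)%type m (inr false) (inr true) (fun u y => X u y && mu u && ups y) isT.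
rewrite -HP in E; exact: E.
Qed.

Lemma small_count (m : nat) (X : 'I_m -> 'I_m -> bool) (mu ups : 'I_m -> bool) :
  num_cliques (small_adj X mu ups) 3 =
  #|[set p : 'I_m * 'I_m | X p.1 p.2 && mu p.1 && ups p.2]| * m.
Proof.
have Hp : forall c i j, small_adj X mu ups (c, i) (c, j) = false.
  by move=> c i j; case: (ord3 c) => [->|[->|->]].
have HP : 3 = #|{: 'I_3}| by rewrite card_ord.
rewrite (@countA 'I_3 m (small_adj X mu ups) Hp 3 HP).
have -> : [set h | good (small_adj X mu ups) h] =
   [set h : {ffun _ -> 'I_m} | (fun u y => X u y && mu u && ups y) (h o0) (h o1)].
  apply/setP => h; rewrite !inE /=; apply/idP/idP.
    move=> g; have G : forall c d, c != d -> small_adj X mu ups (c, h c) (d, h d).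
      by move=> c d ncd; move/forallP: g => /(_ c) /forallP /(_ d) /implyP; apply.
    have := G o0 o1 isT; have := G o0 o2 isT; have := G o1 o2 isT.
    by rewrite /small_adj /= => -> -> ->.
  case/andP => [/andP [x m1] u1].
  apply/forallP => c; apply/forallP => d; apply/implyP => ne.
  move: ne; case: (ord3 c) => [->|[->|->]]; case: (ord3 d) => [->|[->|->]];
    by rewrite /small_adj /= ?x ?m1 ?u1.
have E := @countB 'I_3 m o0 o1 (fun u y => X u y && mu u && ups y) isT.
by rewrite card_ord /= expn1 in E; exact: E.
Qed.

Theorem lemma5 (k n : nat) (hk : 3 <= k) (hn : 3 %| n)
  (X : 'I_(n %/ 3) -> 'I_(n %/ 3) -> bool) (mu ups : 'I_(n %/ 3) -> bool) :
  num_cliques (big_adj k X mu ups) k =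
  num_cliques (small_adj X mu ups) 3 * (n %/ 3) ^ (k - 3).
Proof.
rewrite big_count // small_count -mulnA -expnS.
by congr (_ * _ ^ _); lia.
Qed.
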